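(* For every boosted instance $I=(G,t,t^* )$ and every boost action $B=(q,\tau)$ with $\tau\ge t^*_q$, $\mathrm{Win}(I,B)\ge 0$.
   Context: $G=(V,E,c)$ is an undirected graph with edge costs $c\ge0$; $\delta(S)$ denotes the edges with exactly one endpoint in $S$. Shadow moat growing on $(G,s)$, for $s:V\to\mathbb{R}_{\ge0}$: continuous process in time $\tau\ge0$ maintaining a forest (initially empty), its components, and $y_S\ge0$ (initially $0$); at time $\tau$ a component $C$ is active iff some $w\in C$ has $s_w>\tau$, and each active $C$ increases $y_C$ at rate $1$; an edge $e$ between different components with $\sum_{S:e\in\delta(S)}y_S=c_e$ is added and the components merge (ties processed by a fixed rule); stop when nothing is active. A boosted instance is $I=(G,t,t^* )$ with $t,t^*:V\to\mathbb{R}_{\ge0}$ and $t^*_v\ge t_v$ for all $v$. Run shadow moat growing on $(G,t^* )$; at each moment $\tau$, each active component $C$ contributes its growth to $y_{\mathrm{base}}$ if some $w\in C$ has $t_w>\tau$, and to $y_{\mathrm{add}}$ otherwise; so $y_{\mathrm{base}}+y_{\mathrm{add}}=\sum_S y_S$. A boost action $B=(q,\tau)$ with $\tau\ge t^*_q$ yields $\mathrm{WithBoost}(I,B)=(G,t,t^{*\prime})$ where $t^{*\prime}_q=\tau$ and $t^{*\prime}_v=t^*_v$ otherwise. If $(y_{\mathrm{base}},y_{\mathrm{add}})$ and $(y'_{\mathrm{base}},y'_{\mathrm{add}})$ are these quantities for $I$ and $\mathrm{WithBoost}(I,B)$, then $\mathrm{Win}(I,B)=y_{\mathrm{base}}-y'_{\mathrm{base}}$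 and $\mathrm{Loss}(I,B)=y'_{\mathrm{add}}-y_{\mathrm{add}}$. *)

(* Defs.v *)
(* Shadow moat growing as an event-driven discrete process. *)
From HB Require Import structures.
From mathcomp Require Import all_boot all_order all_algebra.
Set Implicit Arguments. Unset Strict Implicit. Unset Printing Implicit Defensive.
Import Order.TTheory GRing.Theory Num.Theory.
Local Open Scope ring_scope.

Section Moat.
Variables (R : realFieldType) (V E : finType) (ends : E -> V * V) (c : E -> R).
(* Fixed tie-breaking rule: picks one edge out of a nonempty set of tight edges. *)
Variable tie : {set E} -> E.

Record state := State {
  st_time : R;
  st_forest : {set E};
  st_y : {ffun {set V} -> R};
  st_base : R;
  st_add : R;
  st_done : bool }.

Definition crosses (e : E) (S : {set V}) : bool :=
  ((ends e).1 \in S) != ((ends e).2 \in S).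

Definition fadj (F : {set E}) : rel V :=
  fun u v => [exists e in F, (ends e == (u, v)) || (ends e == (v, u))].

Definition comp (F : {set E}) (v : V) : {set V} := [set u | connect (fadj F) v u].
Definition comps (F : {set E}) : {set {set V}} := [set comp F v | v : V].

Definition load (y : {ffun {set V} -> R}) (e : E) : R :=
  \sum_(S : {set V} | crosses e S) y S.

Definition between (F : {set E}) (e : E) : bool :=
  comp F (ends e).1 != comp F (ends e).2.

Definition active (s : V -> R) (tau : R) (C : {set V}) : bool :=
  [exists w in C, tau < s w].

Definition rate (s : V -> R) (tau : R) (F : {set E}) (e : E) : nat :=
  active s tau (comp F (ends e).1) + active s tau (comp F (ends e).2).

(* One event of shadow moat growing on (G, s), with base/add accounting
   with respect to t.  Tight edges between different components are added
   one at a time (chosen by [tie]); otherwise, if some component is active,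
   all active components grow until the next event (a threshold s_w is
   reached or an edge becomes tight); otherwise the process stops. *)
Definition step (s t : V -> R) (st : state) : state :=
  let: State tau F y yb ya d := st in
  if d then st else
  let T := [set e | between F e && (load y e == c e)] in
  if T != set0 then State tau (tie T |: F) y yb ya false else
  let A := [set C in comps F | active s tau C] in
  if A == set0 then State tau F y yb ya true else
  let thr := [seq s w - tau | w <- enum V & tau < s w] in
  let ed := [seq (c e - load y e) / (rate s tau F e)%:R
              | e <- enum E & between F e && (0 < rate s tau F e)%N] in
  let cands := thr ++ ed in
  let D := foldr Num.min (head 0 cands) cands in
  let y' := [ffun S => if S \in A then y S + D else y S] in
  (* portion of [tau, tau + D) during which some w in C has t_w > time *)
  let base C := Num.max 0 (Num.min D ((\big[Num.max/0]_(w in C) t w) - tau)) in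
  State (tau + D) F y' (yb + \sum_(C in A) base C)
        (ya + \sum_(C in A) (D - base C)) false.

Definition init_state : state := State 0 set0 [ffun => 0] 0 0 false.

(* Number of events is at most 3|V| (each tie step adds a forest edge, each
   growth step either makes an edge tight -- followed by a tie step -- or
   passes a threshold s_w); once stopped, [step] is the identity, so a
   larger fuel is harmless. *)
Definition fuel : nat := 3 * (#|V| + #|E|) + 3.

Definition final_state (s t : V -> R) : state := iter fuel (step s t) init_state.

(* For a boosted instance (G, t, tstar): run on (G, tstar), account w.r.t. t. *)
Definition y_base (t tstar : V -> R) : R := st_base (final_state tstar t).
Definition y_add (t tstar : V -> R) : R := st_add (final_state tstar t).

Definition boost (tstar : V -> R) (q : V) (tau : R) : V -> R :=
  fun v => if v == q then tau else tstar v.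

Definition Win (t tstar : V -> R) (q : V) (tau : R) : R :=
  y_base t tstar - y_base t (boost tstar q tau).
Definition Loss (t tstar : V -> R) (q : V) (tau : R) : R :=
  y_add t (boost tstar q tau) - y_add t tstar.

End Moat.

(* Main.v *)
Require Import Defs.
From HB Require Import structures.
From mathcomp Require Import all_boot all_order all_algebra.
From mathcomp Require Import ring lra zify.
Require Import Defs.
Set Implicit Arguments. Unset Strict Implicit. Unset Printing Implicit Defensive.
Import Order.TTheory GRing.Theory Num.Theory.
Local Open Scope ring_scope.


Section Graph.
Variables (V E : finType) (ends : E -> V * V).

Lemma fadj_sym F : symmetric (fadj ends F).
Proof.
move=> u v; apply/existsP/existsP => -[e /andP[eF h]]; exists e;
  by rewrite eF orbC.
Qed.

Lemma cs F : connect_sym (fadj ends F).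
Proof. exact/sym_connect_sym/fadj_sym. Qed.

Lemma comp_eq F u v : connect (fadj ends F) u v -> comp ends F u = comp ends F v.
Proof.
move=> h; apply/setP => x; rewrite !inE.
by rewrite (same_connect (cs F) h).
Qed.

Lemma comp_eqP F u v : (comp ends F u == comp ends F v) = connect (fadj ends F) u v.
Proof.
apply/eqP/idP; last exact: comp_eq.
move=> h; have : v \in comp ends F v by rewrite inE connect0.
by rewrite -h inE.
Qed.

Lemma mem_comp F u : u \in comp ends F u.
Proof. by rewrite inE connect0. Qed.

Lemma comp_mem F u x : x \in comp ends F u -> comp ends F x = comp ends F u.
Proof. by rewrite inE => h; apply/esym/comp_eq. Qed.

Lemma betweenE F e : between ends F e = ~~ connect (fadj ends F) (ends e).1 (ends e).2.
Proof. by rewrite /between comp_eqP. Qed.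

Definition Coarse (F F' : {set E}) := forall u v, connect (fadj ends F) u v -> connect (fadj ends F') u v.

Lemma Coarse_sub (F F' : {set E}) : F \subset F' -> Coarse F F'.
Proof.
move=> sFF'; apply: connect_sub => u v /existsP[e /andP[eF h]].
apply: connect1; apply/existsP; exists e; by rewrite (subsetP sFF' e eF).
Qed.

Lemma Coarse_refl F : Coarse F F. Proof. by []. Qed.

Lemma Coarse_tie F F' e : Coarse F F' ->
  connect (fadj ends F') (ends e).1 (ends e).2 -> Coarse (e |: F) F'.
Proof.
move=> cF ce; apply: connect_sub => u v /existsP[e' /andP[]].
rewrite !inE => /orP[/eqP -> | e'F].
  case/orP=> /eqP he; rewrite he in ce => //.
  by rewrite (cs F') in ce.
move=> h; apply: cF; apply: connect1; apply/existsP; exists e'; by rewrite e'F.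
Qed.

Lemma Coarse_between F F' e : Coarse F F' -> between ends F' e -> between ends F e.
Proof. by move=> cF; rewrite !betweenE; apply: contra; apply: cF. Qed.

Lemma Coarse_comp F F' u : Coarse F F' -> comp ends F u \subset comp ends F' u.
Proof. by move=> cF; apply/subsetP => x; rewrite !inE; apply: cF. Qed.

Lemma between_notin F e : between ends F e -> e \notin F.
Proof.
rewrite betweenE; apply: contra => eF; apply: connect1; apply/existsP; exists e.
by rewrite eF -surjective_pairing eqxx.
Qed.

Lemma comps_comp F C : C \in comps ends F -> exists v, C = comp ends F v.
Proof. by case/imsetP => v _ ->; exists v. Qed.

Lemma comp_in F v : comp ends F v \in comps ends F.
Proof. exact: imset_f. Qed.

End Graph.


Section Moat2.
Variables (R : realFieldType) (V E : finType) (ends : E -> V * V) (c : E -> R).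
Variable tie : {set E} -> E.
Variable t : V -> R.

Definition Tset F (y : {ffun {set V} -> R}) := [set e | between ends F e && (load ends y e == c e)].
Definition Aset (s : V -> R) tau F := [set C in comps ends F | active s tau C].
Definition cands (s : V -> R) tau F (y : {ffun {set V} -> R}) :=
  [seq s w - tau | w <- enum V & tau < s w] ++
  [seq (c e - load ends y e) / (rate ends s tau F e)%:R
              | e <- enum E & between ends F e && (0 < rate ends s tau F e)%N].
Definition Dv (l : seq R) := foldr Num.min (head 0 l) l.
Definition bse tau (C : {set V}) d := Num.max 0 (Num.min d ((\big[Num.max/0]_(w in C) t w) - tau)).
Definition G s (st : state R V E) d :=
  let: State tau F y yb ya _ := st in
  let A := Aset s tau F in
  State (tau + d) F [ffun S => if S \in A then y S + d else y S]
    (yb + \sum_(C in A) bse tau C d) (ya + \sum_(C in A) (d - bse tau C d)) false.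

Lemma stepE s st : step ends c tie s t st =
  if st_done st then st else
  if Tset (st_forest st) (st_y st) != set0 then
    State (st_time st) (tie (Tset (st_forest st) (st_y st)) |: st_forest st) (st_y st) (st_base st) (st_add st) false
  else if Aset s (st_time st) (st_forest st) == set0 then
    State (st_time st) (st_forest st) (st_y st) (st_base st) (st_add st) true
  else G s st (Dv (cands s (st_time st) (st_forest st) (st_y st))).
Proof. by case: st => tau F y yb ya []. Qed.

End Moat2.


Section L.
Variables (R : realFieldType) (V E : finType) (ends : E -> V * V) (c : E -> R).

Lemma foldr_le (a : R) l x : x \in a :: l -> foldr Num.min a l <= x.
Proof.
elim: l x => [|b l IH] x /=; first by rewrite inE => /eqP ->.
rewrite !inE ge_min => /or3P[/eqP->|/eqP->|xl].
- by rewrite (IH _ (mem_head _ _)) orbT.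
- by rewrite lexx.
- by rewrite IH ?orbT // inE xl orbT.
Qed.

Lemma foldr_mem (a : R) l : foldr Num.min a l \in a :: l.
Proof.
elim: l => [|b l IH] /=; first by rewrite inE.
rewrite /Num.min; case: ifP => _; rewrite !inE ?eqxx ?orbT //.
move: IH; rewrite inE => /orP[->|->]; by rewrite ?orbT.
Qed.

Lemma Dv_le (l : seq R) x : x \in l -> Dv l <= x.
Proof. by case: l => // a l xl; apply: foldr_le; rewrite inE xl orbT. Qed.

Lemma Dv_mem (l : seq R) : l != [::] -> Dv l \in l.
Proof.
case: l => // a l _; have := foldr_mem a (a :: l).
by rewrite /Dv /= inE => /orP[/eqP->|]; rewrite ?mem_head.
Qed.

Lemma Dv_ge0 (l : seq R) : (forall x, x \in l -> 0 <= x) -> 0 <= Dv l.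
Proof.
case: l => [|a l] h; first by rewrite /Dv.
by have := h _ (@Dv_mem (a :: l) erefl).
Qed.

Lemma foldr_shift (a : R) l d :
  foldr Num.min (a - d) [seq x - d | x <- l] = foldr Num.min a l - d.
Proof.
elim: l => [|b l IH] //=; rewrite IH.
rewrite /Num.min ltrD2r; by case: ifP.
Qed.

Lemma Dv_shift (l : seq R) d : l != [::] -> Dv [seq x - d | x <- l] = Dv l - d.
Proof. case: l => // a l _; by rewrite /Dv -(foldr_shift a (a :: l)). Qed.

End L.


Section L2.
Variables (R : realFieldType) (V E : finType) (ends : E -> V * V) (c : E -> R).

Lemma inAset (s : V -> R) tau F C : (C \in Aset ends s tau F) = (C \in comps ends F) && active s tau C.
Proof. by rewrite inE. Qed.

Lemma load_upd (s : V -> R) tau F (y : {ffun {set V} -> R}) d e : between ends F e ->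
  load ends [ffun S => if S \in Aset ends s tau F then y S + d else y S] e =
  load ends y e + d * (rate ends s tau F e)%:R.
Proof.
move=> be; rewrite /load.
rewrite (eq_bigr (fun S => y S + (if S \in Aset ends s tau F then d else 0))); last first.
  by move=> S _; rewrite ffunE; case: ifP; rewrite ?addr0.
rewrite big_split /=; congr (_ + _).
set u := (ends e).1; set v := (ends e).2.
have huv : comp ends F u != comp ends F v by [].
have nu : v \notin comp ends F u.
  by apply/negP=> h; move: huv; rewrite -(comp_mem h) eqxx.
have nv : u \notin comp ends F v.
  by apply/negP=> h; move: huv; rewrite -(comp_mem h) eqxx.
have cu : crosses ends e (comp ends F u).
  by rewrite /crosses -/u -/v mem_comp (negbTE nu).
have cv : crosses ends e (comp ends F v).
  by rewrite /crosses -/u -/v mem_comp (negbTE nv).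
rewrite (bigD1 (comp ends F u)) //= (bigD1 (comp ends F v)) /=; last first.
  by rewrite cv eq_sym.
rewrite big1 ?addr0; last first.
  move=> S /andP[/andP[cS nSu] nSv]; rewrite inAset.
  case: (boolP (S \in comps ends F)) => //= /comps_comp [x Sx].
  move: cS; rewrite /crosses -/u -/v.
  case: (boolP (u \in S)) => [uS|_] /=.
    by move: nSu uS; rewrite Sx => + uS; rewrite (comp_mem uS) eqxx.
  case: (boolP (v \in S)) => [vS|_] //= _.
  by move: nSv vS; rewrite Sx => + vS; rewrite (comp_mem vS) eqxx.
rewrite !inAset !comp_in /= /rate natrD mulrDr.
by case: (active s tau (comp ends F u)); case: (active s tau (comp ends F v));
  rewrite /= ?mulr1 ?mulr0.
Qed.

End L2.


Section J.
Variables (R : realFieldType) (V E : finType) (ends : E -> V * V) (c : E -> R).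
Variable tie : {set E} -> E.
Variable t : V -> R.
Hypothesis Hc : forall e, 0 <= c e.

Definition J (st : state R V E) := 0 <= st_time st /\
  forall e, between ends (st_forest st) e -> load ends (st_y st) e <= c e.

Lemma mem_thr (s : V -> R) tau F (y : {ffun {set V} -> R}) w : tau < s w ->
  s w - tau \in cands ends c s tau F y.
Proof.
move=> h; rewrite mem_cat; apply/orP; left.
by apply: map_f; rewrite mem_filter h mem_enum.
Qed.

Lemma mem_ed (s : V -> R) tau F (y : {ffun {set V} -> R}) e :
  between ends F e -> (0 < rate ends s tau F e)%N ->
  (c e - load ends y e) / (rate ends s tau F e)%:R \in cands ends c s tau F y.
Proof.
move=> h1 h2; rewrite mem_cat; apply/orP; right.
by apply: (map_f (fun e => (c e - load ends y e) / (rate ends s tau F e)%:R)); rewrite mem_filter h1 h2 mem_enum.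
Qed.

Lemma cands_cases (s : V -> R) tau F (y : {ffun {set V} -> R}) x :
  x \in cands ends c s tau F y ->
  (exists2 w, tau < s w & x = s w - tau) \/
  (exists e, [/\ between ends F e, (0 < rate ends s tau F e)%N &
      x = (c e - load ends y e) / (rate ends s tau F e)%:R]).
Proof.
rewrite mem_cat => /orP[/mapP[w]|/mapP[e]]; rewrite mem_filter.
  by case/andP => h _ ->; left; exists w.
by case/andP => /andP[h1 h2] _ ->; right; exists e.
Qed.

Lemma cands_ge0 (s : V -> R) st : J st ->
  forall x, x \in cands ends c s (st_time st) (st_forest st) (st_y st) -> 0 <= x.
Proof.
case=> _ hl x /cands_cases [[w h ->]|[e [h1 h2 ->]]].
  by rewrite subr_ge0 ltW.
by rewrite divr_ge0 ?ler0n // subr_ge0 hl.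
Qed.

Lemma J_G (s : V -> R) st d : J st -> 0 <= d ->
  d <= Dv (cands ends c s (st_time st) (st_forest st) (st_y st)) -> J (G ends t s st d).
Proof.
case: st => tau F y yb ya dn /= [h0 hl] d0 dD; split => /=; first by rewrite addr_ge0.
move=> e be; rewrite load_upd //.
case: (posnP (rate ends s tau F e)) => [->|rp]; first by rewrite mulr0 addr0 hl.
have := Dv_le (mem_ed y be rp) => /(le_trans dD).
rewrite ler_pdivlMr ?ltr0n // => h; lra.
Qed.

Lemma J_step (s : V -> R) st : J st -> J (step ends c tie s t st).
Proof.
move=> Jst; rewrite stepE.
case: ifP => // _; case: ifP => [_|_].
  split; first by case: Jst.
  move=> e /= be; apply: Jst.2; apply: Coarse_between be.
  by apply: Coarse_sub; apply: subsetUr.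
case: ifP => _; first by case: Jst.
apply: J_G => //; apply: Dv_ge0; exact: cands_ge0.
Qed.

End J.


Ltac mm := repeat match goal with
  | |- context [Num.min ?a ?b] => case: (leP a b) => ?
  | |- context [Num.max ?a ?b] => case: (leP a b) => ? end.

Lemma bse_split (R : realFieldType) (d D x : R) : 0 <= d -> d <= D ->
  Num.max 0 (Num.min d x) + Num.max 0 (Num.min (D - d) (x - d)) = Num.max 0 (Num.min D x).
Proof. move=> h1 h2; mm; lra. Qed.

Section S.
Variables (R : realFieldType) (V E : finType) (ends : E -> V * V) (c : E -> R).
Variable tie : {set E} -> E.
Variable t : V -> R.

Definition Dst (s : V -> R) (st : state R V E) :=
  Dv (cands ends c s (st_time st) (st_forest st) (st_y st)).

Lemma step_grow (s : V -> R) st : ~~ st_done st ->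
  Tset ends c (st_forest st) (st_y st) = set0 ->
  Aset ends s (st_time st) (st_forest st) != set0 ->
  step ends c tie s t st = G ends t s st (Dst s st).
Proof. by move=> h1 h2 h3; rewrite stepE (negbTE h1) h2 eqxx /= (negbTE h3). Qed.

Lemma Aset_ex (s : V -> R) tau F : Aset ends s tau F != set0 -> exists w, tau < s w.
Proof.
case/set0Pn => C; rewrite inE => /andP[_ /existsP[w /andP[_ h]]]; by exists w.
Qed.

Lemma Aset_ne (s : V -> R) tau F w : tau < s w -> Aset ends s tau F != set0.
Proof.
move=> h; apply/set0Pn; exists (comp ends F w); rewrite inE comp_in /=.
by apply/existsP; exists w; rewrite mem_comp h.
Qed.

Lemma cands_ne (s : V -> R) tau F (y : {ffun {set V} -> R}) w : tau < s w ->
  cands ends c s tau F y != [::].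
Proof. by move=> h; apply/eqP => e; have := mem_thr ends c F y h; rewrite e. Qed.

Lemma active_ext (s s' : V -> R) tau tau' C : (forall w, (tau < s w) = (tau' < s' w)) ->
  active s tau C = active s' tau' C.
Proof.
by move=> h; apply/existsP/existsP => -[w /andP[wC hw]]; exists w; rewrite wC ?h // -h.
Qed.

Lemma bse_ge0 tau C d : 0 <= bse t tau C d.
Proof. by rewrite /bse le_max lexx. Qed.

Lemma bse_mono tau C d d' : d <= d' -> bse t tau C d <= bse t tau C d'.
Proof. by rewrite /bse => h; mm; lra. Qed.

Lemma bse_split2 tau C d D : 0 <= d -> d <= D ->
  bse t tau C d + bse t (tau + d) C (D - d) = bse t tau C D.
Proof.
move=> h1 h2; rewrite /bse -(bse_split _ h1 h2).
by rewrite opprD addrA.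
Qed.

Lemma G_base_le (s : V -> R) st d d' : d <= d' ->
  st_base (G ends t s st d) <= st_base (G ends t s st d').
Proof.
case: st => tau F y yb ya dn /= h; rewrite lerD2l; apply: ler_sum => C _.
exact: bse_mono.
Qed.

Lemma G_base_ge (s : V -> R) st d : st_base st <= st_base (G ends t s st d).
Proof.
case: st => tau F y yb ya dn /=; rewrite lerDl; apply: sumr_ge0 => C _.
exact: bse_ge0.
Qed.

Lemma split_step (s : V -> R) st d : ~~ st_done st ->
  Tset ends c (st_forest st) (st_y st) = set0 ->
  Aset ends s (st_time st) (st_forest st) != set0 ->
  0 <= d -> d < Dst s st ->
  step ends c tie s t (G ends t s st d) = step ends c tie s t st.
Proof.
move=> nd hT hA d0 dD; rewrite [RHS]step_grow //.
move: nd hT hA dD; case: st => tau F y yb ya dn nd hT hA dD.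
rewrite /= in nd hT hA dD.
rewrite /Dst /= in dD.
have hw : forall w, (tau + d < s w) = (tau < s w).
  move=> w; apply/idP/idP => h.
    rewrite (le_lt_trans _ h) //; lra.
  have := Dv_le (mem_thr ends c F y h) => h2.
  have : d < s w - tau by exact: (lt_le_trans dD h2).
  lra.
have hact : forall C, active s (tau + d) C = active s tau C.
  by move=> C; apply: active_ext.
have hA1 : Aset ends s (tau + d) F = Aset ends s tau F.
  by apply/setP => C; rewrite !inE hact.
have hr : forall e, rate ends s (tau + d) F e = rate ends s tau F e.
  by move=> e; rewrite /rate !hact.
set y1 := [ffun S => if S \in Aset ends s tau F then y S + d else y S].
have hT1 : Tset ends c F y1 = set0.
  apply/setP => e; rewrite !inE; apply/negbTE.
  case be: (between ends F e) => //=.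
  have ne : load ends y e != c e.
    by apply/negP => h; have := in_set0 e; rewrite -hT inE be h.
  rewrite /y1 load_upd //.
  case: (posnP (rate ends s tau F e)) => [->|rp]; first by rewrite mulr0 addr0.
  have := lt_le_trans dD (Dv_le (mem_ed c y be rp)).
  rewrite ltr_pdivlMr ?ltr0n // => h; apply/eqP => h'; lra.
have [w hw0] := Aset_ex hA.
have hc : cands ends c s (tau + d) F y1 = [seq x - d | x <- cands ends c s tau F y].
  rewrite /cands map_cat; congr (_ ++ _).
    rewrite (eq_filter hw) -map_comp; apply: eq_map => x /=; ring.
  rewrite (@eq_filter _ _ (fun e => between ends F e && (0 < rate ends s tau F e)%N)); last first.
    by move=> e /=; rewrite hr.
  rewrite -map_comp; apply/eq_in_map => e; rewrite mem_filter => /andP[/andP[be rp] _] /=.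
  rewrite hr /y1 load_upd //; field.
  by rewrite pnatr_eq0 -lt0n.
rewrite step_grow /= ?hT1 ?hA1 //.
rewrite /Dst /= hc Dv_shift ?(cands_ne _ _ hw0) // /G.
congr State.
- ring.
- apply/ffunP => S; rewrite !ffunE; case: (S \in Aset ends s tau F) => //; ring.
- rewrite -addrA -big_split /=; congr (_ + _); apply: eq_bigr => C _.
  have := bse_split2 tau C d0 (ltW dD); lra.
- rewrite -addrA -big_split /=; congr (_ + _); apply: eq_bigr => C _.
  have := bse_split2 tau C d0 (ltW dD); lra.
Qed.

End S.


Section T.
Variables (R : realFieldType) (V E : finType) (ends : E -> V * V) (c : E -> R).
Variable tie : {set E} -> E.
Variable t : V -> R.
Hypothesis Htie : forall A : {set E}, A != set0 -> tie A \in A.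
Variable s : V -> R.

Notation stp := (step ends c tie s t).

Definition Phi (st : state R V E) : nat :=
  (2 * (#|E| - #|st_forest st|) + #|[set w | (st_time st < s w)%R]| +
   (Tset ends c (st_forest st) (st_y st) == set0))%N.

Lemma done_iter st n : st_done st -> iter n stp st = st.
Proof.
move=> h; elim: n => //= n ->; by rewrite stepE h.
Qed.

Lemma phi_dec st : J ends c st -> ~~ st_done st -> st_done (stp st) \/ (Phi (stp st) < Phi st)%N.
Proof.
move=> Jst nd; rewrite stepE (negbTE nd).
case: ifP => [hT|hT].
  right; rewrite /Phi /=.
  set T := Tset ends c (st_forest st) (st_y st).
  have eT := Htie hT; move: (eT); rewrite inE => /andP[be _].
  have nF := between_notin be.
  have cF : #|tie T |: st_forest st| = (#|st_forest st|).+1 by rewrite cardsU1 nF.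
  have cE : (#|tie T |: st_forest st| <= #|E|)%N by apply: max_card.
  rewrite cF (negbTE hT); move: cE; rewrite cF.
  case: (Tset _ _ _ _ == set0) => /=; lia.
move/negbT: hT; rewrite negbK => /eqP hT.
case: ifP => [//|/negbT hA]; first by left.
right.
have D0 : 0 <= Dst ends c s st by apply: Dv_ge0; apply: cands_ge0.
have [w0 hw0] := Aset_ex hA.
have Dm := Dv_mem (cands_ne ends c (st_forest st) (st_y st) hw0).
move: D0 Dm; rewrite /Dst /Phi; case: st Jst nd hT hA hw0 => tau F y yb ya dn Jst nd hT hA hw0 /=.
rewrite hT eqxx /= => D0 Dm.
set D := Dv (cands ends c s tau F y) in D0 Dm *.
have sub : [set w | tau + D < s w] \subset [set w | tau < s w].
  apply/subsetP => w; rewrite !inE => h; apply: le_lt_trans h; lra.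
case/cands_cases: Dm => [[w hw eD]|[e [be rp eD]]].
  have pr : [set w | tau + D < s w] \proper [set w | tau < s w].
    apply/properP; split => //; exists w; rewrite !inE ?hw //.
    by rewrite eD addrC subrK ltxx.
  have := proper_card pr.
  set a := #|[set w1 | (tau + D < s w1)%R]|; set b := #|[set w1 | (tau < s w1)%R]|; clearbody a b; case: (Tset _ _ _ _ == set0) => /=; lia.
have : Tset ends c F [ffun S => if S \in Aset ends s tau F then y S + D else y S] != set0.
  apply/set0Pn; exists e; rewrite inE be /= load_upd // eD.
  rewrite mulrC mulrCA divff ?mulr1 ?pnatr_eq0 -?lt0n //.
  apply/eqP; ring.
move/negbTE => ->.
have := subset_leq_card sub; set a := #|[set w1 | (tau + D < s w1)%R]|; set b := #|[set w1 | (tau < s w1)%R]|; clearbody a b; rewrite /=; lia.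
Qed.

Lemma term k st : J ends c st -> (Phi st < k)%N -> st_done (iter k stp st).
Proof.
elim: k st => // k IH st Jst hk.
case: (boolP (st_done st)) => [h|nd]; first by rewrite done_iter.
rewrite iterSr.
case: (phi_dec Jst nd) => [h|h]; first by rewrite done_iter.
apply: IH; first exact: J_step.
lia.
Qed.

End T.


Section Sum.
Variables (R : realFieldType) (V E : finType) (ends : E -> V * V).
Variable t : V -> R.
Hypothesis Ht : forall v, 0 <= t v.

Definition MC (C : {set V}) := \big[Num.max/0]_(w in C) t w.

Lemma MC_arg (C : {set V}) v : v \in C -> exists2 w, w \in C & MC C = t w.
Proof.
move=> vC; case: (arg_maxP (fun w => t w) vC) => w wC hmax.
exists w => //; apply/le_anti/andP; split.
  by apply: bigmax_le => // x xC; apply: hmax.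
rewrite /MC; apply: le_bigmax_cond; exact: wC.
Qed.

Lemma MC_ge (C : {set V}) w : w \in C -> t w <= MC C.
Proof. by move=> wC; rewrite /MC; apply: le_bigmax_cond; exact: wC. Qed.

Lemma bse_zero tau (C : {set V}) d : 0 <= tau -> (forall w, w \in C -> t w <= tau) -> bse t tau C d = 0.
Proof.
move=> h0 h; have : MC C <= tau by apply: bigmax_le.
rewrite /bse -/(MC C) => h1.
have h2 : Num.min d (MC C - tau) <= 0 by rewrite ge_min; apply/orP; right; lra.
by apply/eqP; rewrite eq_le ge_max lexx h2 le_max lexx.
Qed.

Lemma bse_monoM tau d C1 C2 : d >= 0 -> MC C1 <= MC C2 -> bse t tau C1 d <= bse t tau C2 d.
Proof. by rewrite /bse -/(MC C1) -/(MC C2) => h0 h; mm; lra. Qed.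

Lemma sum_Aset (s : V -> R) tau F d : 0 <= tau -> (forall v, t v <= s v) ->
  \sum_(C in Aset ends s tau F) bse t tau C d = \sum_(C in comps ends F) bse t tau C d.
Proof.
move=> h0 hs.
rewrite [RHS](bigID (fun C => active s tau C)) /= [X in _ + X]big1 ?addr0; last first.
  move=> C /andP[_ na]; apply: bse_zero => // w wC.
  apply: le_trans (hs w) _; rewrite leNgt; apply/negP => h.
  by move/negP: na; apply; apply/existsP; exists w; rewrite wC.
by apply: eq_bigl => C; rewrite inAset.
Qed.

Lemma sum_coarse F F' tau d : 0 <= tau -> 0 <= d -> Coarse ends F F' ->
  \sum_(C in comps ends F') bse t tau C d <= \sum_(C in comps ends F) bse t tau C d.
Proof.
move=> h0 d0 cF.
have step1 : forall C', C' \in comps ends F' ->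
    bse t tau C' d <= \sum_(C in comps ends F | C \subset C') bse t tau C d.
  move=> C' /comps_comp [v ->].
  have [w wC hw] := MC_arg (mem_comp ends F' v).
  rewrite (bigD1 (comp ends F w)) /=; last first.
    rewrite comp_in /=; rewrite -(comp_mem wC); exact: Coarse_comp.
  apply: ler_wpDr; first by apply: sumr_ge0 => C _; exact: bse_ge0.
  apply: bse_monoM => //; rewrite hw; apply: MC_ge; exact: mem_comp.
apply: le_trans; first by apply: ler_sum; exact: step1.
rewrite (exchange_big_dep (fun C => C \in comps ends F)) /=; last by move=> ? ? _ /andP[].
apply: ler_sum => C /comps_comp [v ->].
rewrite (@big_pred1 _ _ _ _ (comp ends F' v)) //.
move=> C' /=; apply/idP/idP.
  case/andP => /comps_comp [x ->] /andP[_ sub].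
  have vC := subsetP sub v (mem_comp _ _ _).
  by rewrite (comp_mem vC).
move/eqP ->; rewrite comp_in comp_in /=; exact: Coarse_comp.
Qed.

End Sum.


Section Gen.
Variables (R : realFieldType) (V E : finType) (ends : E -> V * V) (c : E -> R).
Variable tie : {set E} -> E.
Variable t : V -> R.
Hypothesis Ht : forall v, 0 <= t v.

Lemma base_step_ge (s : V -> R) x : st_base x <= st_base (step ends c tie s t x).
Proof.
rewrite stepE; case: ifP => // _; case: ifP => // _; case: ifP => // _.
exact: G_base_ge.
Qed.

Lemma base_iter_mono (s : V -> R) x a b : (a <= b)%N ->
  st_base (iter a (step ends c tie s t) x) <= st_base (iter b (step ends c tie s t) x).
Proof.
move=> /subnK <-; elim: (b - a)%N => //= n IH.
by apply: le_trans IH _; apply: base_step_ge.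
Qed.

Lemma base_const_step (s : V -> R) x : J ends c x -> (forall w, t w <= st_time x) ->
  st_base (step ends c tie s t x) = st_base x /\ st_time x <= st_time (step ends c tie s t x).
Proof.
move=> Jx ht; rewrite stepE; case: ifP => // _; case: ifP => // _; case: ifP => // _.
have D0 : 0 <= Dst ends c s x by apply: Dv_ge0; apply: cands_ge0.
move: D0 Jx ht; rewrite /Dst; case: x => tau F y yb ya dn /= D0 [h0 _] ht.
split; last lra.
rewrite big1 ?addr0 // => C _; apply: bse_zero => //.
Qed.

Lemma base_const (s : V -> R) x n : J ends c x -> (forall w, t w <= st_time x) ->
  st_base (iter n (step ends c tie s t) x) = st_base x.
Proof.
elim: n x => // n IH x Jx ht; rewrite iterSr.
have [e1 e2] := base_const_step s Jx ht.
rewrite IH ?e1 //; first exact: J_step.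
by move=> w; apply: le_trans (ht w) e2.
Qed.

Lemma active_mono (s s' : V -> R) tau (C C' : {set V}) : C \subset C' -> (forall w, s w <= s' w) ->
  active s tau C -> active s' tau C'.
Proof.
move=> sub hs /existsP[w /andP[wC h]]; apply/existsP; exists w.
by rewrite (subsetP sub w wC) (lt_le_trans h (hs w)).
Qed.

Lemma rate_mono (s s' : V -> R) tau F F' e : Coarse ends F F' -> (forall w, s w <= s' w) ->
  ((rate ends s tau F e)%:R <= (rate ends s' tau F' e)%:R :> R).
Proof.
move=> cF hs; rewrite ler_nat /rate.
have h1 := active_mono (tau:=tau) (s:=s) (Coarse_comp (ends e).1 cF) hs.
have h2 := active_mono (tau:=tau) (s:=s) (Coarse_comp (ends e).2 cF) hs.
apply: leq_add.
  by case: (active s tau _) h1 => // ->.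
by case: (active s tau _) h2 => // ->.
Qed.

End Gen.


Section Main.
Variables (R : realFieldType) (V E : finType) (ends : E -> V * V) (c : E -> R).
Variable tie : {set E} -> E.
Variables (t s s' : V -> R).
Hypothesis Hc : forall e, 0 <= c e.
Hypothesis Htie : forall A : {set E}, A != set0 -> tie A \in A.
Hypothesis Ht : forall v, 0 <= t v.
Hypothesis Hts : forall v, t v <= s v.
Hypothesis Hss : forall v, s v <= s' v.

Notation stp := (step ends c tie s t).
Notation stp' := (step ends c tie s' t).

Record Inv (st st' : state R V E) : Prop := MkInv {
  i1 : ~~ st_done st; i2 : ~~ st_done st'; i3 : st_time st = st_time st';
  i4 : J ends c st; i5 : J ends c st';
  i6 : Coarse ends (st_forest st) (st_forest st');
  i7 : forall e, between ends (st_forest st') e -> load ends (st_y st) e <= load ends (st_y st') e;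
  i8 : st_base st' <= st_base st }.

Lemma Inv_tie' st st' : Inv st st' -> Tset ends c (st_forest st') (st_y st') != set0 ->
  Inv st (stp' st').
Proof.
move=> [nd nd' et J1 J2 cF hl hb] hT.
have J2' := J_step tie t s' J2.
have Est : stp' st' = State (st_time st') (tie (Tset ends c (st_forest st') (st_y st')) |: st_forest st') (st_y st') (st_base st') (st_add st') false.
  by rewrite stepE (negbTE nd') hT.
rewrite Est in J2' *.
constructor => //; try exact: J2'; rewrite /=.
- move=> u v /cF; apply: Coarse_sub; exact: subsetUr.
- move=> e be; apply: hl; apply: Coarse_between be; apply: Coarse_sub; exact: subsetUr.
Qed.

Lemma Inv_tie st st' : Inv st st' -> Tset ends c (st_forest st') (st_y st') = set0 ->
  Tset ends c (st_forest st) (st_y st) != set0 -> Inv (stp st) st'.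
Proof.
move=> [nd nd' et J1 J2 cF hl hb] hT' hT.
have J1' := J_step tie t s J1.
have Est : stp st = State (st_time st) (tie (Tset ends c (st_forest st) (st_y st)) |: st_forest st) (st_y st) (st_base st) (st_add st) false.
  by rewrite stepE (negbTE nd) hT.
rewrite Est in J1' *.
constructor => //; try exact: J1'; rewrite /=.
apply: Coarse_tie => //.
have := Htie hT; rewrite inE => /andP[be /eqP le].
set e := tie _ in be le *.
apply/negPn/negP => nc.
have be' : between ends (st_forest st') e by rewrite betweenE.
have h1 := hl e be'; have h2 := J2.2 e be'.
have : e \in Tset ends c (st_forest st') (st_y st').
  rewrite inE be' /=; apply/eqP; apply/le_anti; rewrite h2 /=; by rewrite -le.
by rewrite hT' inE.
Qed.

Lemma Inv_grow st st' d : Inv st st' ->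
  Tset ends c (st_forest st) (st_y st) = set0 ->
  Tset ends c (st_forest st') (st_y st') = set0 ->
  0 <= d -> d <= Dst ends c s st -> d <= Dst ends c s' st' ->
  Inv (G ends t s st d) (G ends t s' st' d).
Proof.
move=> I0 hT hT' d0 dD dD'.
have J1 := J_G t (i4 I0) d0 dD.
have J2 := J_G t (i5 I0) d0 dD'.
move: I0 J1 J2 hT hT' dD dD'; case: st => tau F y yb ya dn; case: st' => tau' F' y' yb' ya' dn'.
move=> [/= nd nd' et J1 J2 cF hl hb] J1' J2' hT hT' dD dD'.
subst tau'.
constructor => //=.
- move=> e be; have be0 := Coarse_between cF be.
  rewrite !load_upd //; apply: lerD; first exact: hl.
  by apply: ler_wpM2l => //; apply: rate_mono.
- apply: lerD => //.
  have h0 : 0 <= tau by case: J1.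
  rewrite (sum_Aset ends F d h0 Hts) (sum_Aset ends F' d h0 (fun v => le_trans (Hts v) (Hss v))).
  exact: sum_coarse.
Qed.

Lemma iter_split (s0 : V -> R) x d n : ~~ st_done x ->
  Tset ends c (st_forest x) (st_y x) = set0 ->
  Aset ends s0 (st_time x) (st_forest x) != set0 ->
  0 <= d -> d < Dst ends c s0 x ->
  iter n.+1 (step ends c tie s0 t) (G ends t s0 x d) = iter n.+1 (step ends c tie s0 t) x.
Proof. by move=> *; rewrite !iterSr split_step. Qed.

Lemma sim N : forall n k st st', (n + k <= N)%N -> Inv st st' -> st_done (iter k stp st) ->
  exists m, st_base (iter n stp' st') <= st_base (iter m stp st).
Proof.
elim: N => [|N IH] n k st st' hN I0 hk.
  case: n hN => [|n] hN; first by exists 0%N; exact: (i8 I0).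
  lia.
case: n hN => [|n] hN; first by exists 0%N; exact: (i8 I0).
case: k hN hk => [|k] hN hk; first by rewrite /= (negbTE (i1 I0)) in hk.
have [nd nd' et J1 J2 cF hl hb] := I0.
case: (boolP [exists w, st_time st < s w]) => [/existsP[w0 hw0] | hnone]; last first.
  exists 0%N; rewrite base_const //=.
  move=> w; rewrite -et; apply: le_trans (Hts w) _.
  by move/existsPn: hnone => /(_ w); rewrite -leNgt.
case: (eqVneq (Tset ends c (st_forest st') (st_y st')) set0) => hT'; last first.
  have [m hm] := IH n k.+1 st (stp' st') ltac:(lia) (Inv_tie' I0 hT') hk.
  by exists m; rewrite iterSr.
case: (eqVneq (Tset ends c (st_forest st) (st_y st)) set0) => hT; last first.
  have [m hm] := IH n.+1 k (stp st) st' ltac:(lia) (Inv_tie I0 hT' hT) ltac:(by rewrite -iterSr).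
  by exists m.+1; rewrite [iter m.+1 _ _]iterSr.
have hA := Aset_ne ends (st_forest st) hw0.
have hw0' : st_time st' < s' w0 by rewrite -et; apply: lt_le_trans hw0 (Hss w0).
have hA' := Aset_ne ends (st_forest st') hw0'.
have D0 : 0 <= Dst ends c s st by apply: Dv_ge0; apply: cands_ge0.
have D0' : 0 <= Dst ends c s' st' by apply: Dv_ge0; apply: cands_ge0.
case: (ltgtP (Dst ends c s st) (Dst ends c s' st')) => hDD.
- have I1 := Inv_grow I0 hT hT' D0 (lexx _) (ltW hDD).
  rewrite -(@step_grow _ _ _ ends c tie t s st nd hT hA) in I1.
  have [m hm] := IH n.+1 k (stp st) _ ltac:(lia) I1 ltac:(by rewrite -iterSr).
  exists m.+1; rewrite [iter m.+1 _ _]iterSr -(iter_split _ nd' hT' hA' D0 hDD) //.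
- have I1 := Inv_grow I0 hT hT' D0' (ltW hDD) (lexx _).
  rewrite -(@step_grow _ _ _ ends c tie t s' st' nd' hT' hA') in I1.
  have hk1 : st_done (iter k.+1 stp (G ends t s st (Dst ends c s' st'))).
    by rewrite iter_split.
  have [m hm] := IH n k.+1 _ (stp' st') ltac:(lia) I1 hk1.
  case: m hm => [|m] hm.
    exists 1%N; rewrite iterSr /=; apply: le_trans hm _.
    by rewrite (@step_grow _ _ _ ends c tie t s st nd hT hA); apply: G_base_le; apply: ltW.
  by exists m.+1; rewrite iterSr -(iter_split _ nd hT hA D0' hDD) //.
- have I1 := Inv_grow I0 hT hT' D0 (lexx _) (ltac:(by rewrite hDD)).
  rewrite -(@step_grow _ _ _ ends c tie t s st nd hT hA) in I1.
  rewrite hDD -(@step_grow _ _ _ ends c tie t s' st' nd' hT' hA') in I1.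
  have [m hm] := IH n k _ _ ltac:(lia) I1 ltac:(by rewrite -iterSr).
  by exists m.+1; rewrite [iter m.+1 _ _]iterSr [iter n.+1 _ _]iterSr.
Qed.

End Main.

Unset Implicit Arguments.


Theorem mainTheorem13 (R : realFieldType) (V E : finType) (ends : E -> V * V)
  (c : E -> R) (tie : {set E} -> E) (t tstar : V -> R) (q : V) (tau : R) :
  (forall e, 0 <= c e) ->
  (forall A : {set E}, A != set0 -> tie A \in A) ->
  (forall v, 0 <= t v) ->
  (forall v, t v <= tstar v) ->
  tstar q <= tau ->
  0 <= Win ends c tie t tstar q tau.
Proof.
move=> Hc Htie Ht Hts Hq.
set s' := boost tstar q tau.
have Hss : forall v, tstar v <= s' v.
  by move=> v; rewrite /s' /boost; case: eqP => [->|].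
rewrite /Win /y_base /final_state subr_ge0.
have Jinit : J ends c (init_state R V E).
  split => //= e _; rewrite /load big1 // => S _; by rewrite ffunE.
have I0 : Inv ends c (init_state R V E) (init_state R V E).
  by constructor.
have hk : st_done (iter (fuel V E) (step ends c tie tstar t) (init_state R V E)).
  apply: term => //.
  rewrite /Phi /fuel /=.
  have := max_card [set w | (0 < tstar w)%R].
  set a := #|[set w | (0 < tstar w)%R]|; clearbody a.
  rewrite cards0.
  case: (Tset _ _ _ _ == set0) => /=; lia.
have [m hm] := sim Htie Ht Hts Hss (leqnn (fuel V E + fuel V E)) I0 hk.
apply: le_trans hm _.
case: (leqP m (fuel V E)) => hm'; first exact: base_iter_mono.
by rewrite -(subnK (ltnW hm')) iterD done_iter.
Qed.
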